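(* Let $n\ge2$, $k\ge2$. Denote by $\partial_k$ the graph distance in $H_{n,k}$ and by $\partial_{k-1}$ the graph distance in $H_{n,k-1}$; let $\mathbf r'=0^{k-1}$ be the root of $H_{n,k-1}$ and $P'$ its set of peripheral vertices. For $\mathbf x',\mathbf y'\in\mathbb{Z}_n^{k-1}$ and $\alpha,\beta\in\mathbb{Z}_n$ write $\alpha\mathbf x'$ for the vertex of $H_{n,k}$ obtained by prepending $\alpha$. Then: (a) for every $\alpha\in\mathbb{Z}_n$, $\partial_k(\alpha\mathbf x',\alpha\mathbf y')=\partial_{k-1}(\mathbf x',\mathbf y')$; (b) for every $\alpha\neq0$, $\partial_k(0\mathbf x',\alpha\mathbf y')=\partial_{k-1}(\mathbf x',\mathbf r')+1+\partial_{k-1}(\mathbf y',P')$; (c) for all $\alpha,\beta\neq0$ with $\alpha\ne\beta$, $$\partial_k(\alpha\mathbf x',\beta\mathbf y')=\min\{\partial_{k-1}(\mathbf x',P')+2+\partial_{k-1}(\mathbf y',P'),\ \partial_{k-1}(\mathbf x',\mathbf r')+1+\partial_{k-1}(\mathbf r',\mathbf y')\}.$$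
   Context: Let $n\ge 2$ and $k\ge 1$ be integers. $H_{n,k}$ is the simple undirected graph with vertex set $V_{n,k}=\mathbb{Z}_n^k$ (so $|V_{n,k}|=n^k$), whose vertices are written as strings $x_1x_2\ldots x_k$ with $x_j\in\mathbb{Z}_n=\{0,1,\ldots,n-1\}$. Two distinct vertices are adjacent if and only if they are related by one of the following rules. For $i=0$ the prefix $x_1\ldots x_i$ is empty, and ''$0\ldots0$'' denotes a string of zeros completing the word to length $k$. (R1) $x_1\ldots x_{k-1}x_k\sim x_1\ldots x_{k-1}y_k$ whenever $y_k\neq x_k$. (R2) For $0\le i\le k-2$: $x_1\ldots x_i0\ldots0\sim x_1\ldots x_ix_{i+1}\ldots x_k$ whenever $x_j\neq 0$ for all $i+1\le j\le k$. (R3) For $1\le i\le k-1$: $x_1\ldots x_{i-1}x_i0\ldots0\sim x_1\ldots x_{i-1}y_i0\ldots0$ whenever $x_i,y_i\neq0$ and $x_i\ne y_i$. In particular, $H_{n,1}$ is the complete graph $K_n$. The root of $H_{n,k}$ is $\mathbf r=00\ldots0$; a vertex of $H_{n,k}$ is peripheral if all its coordinates are nonzero, and $P$ denotes the set of peripheral vertices. For a vertex $\mathbf x$ and a vertex set $U$, $\partial(\mathbf x,U)=\min_{\mathbf u\in U}\partial(\mathbf x,\mathbf u)$. *)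

(* Defs.v *)
From mathcomp Require Import all_boot.
Set Implicit Arguments. Unset Strict Implicit. Unset Printing Implicit Defensive.

(* Vertices of H_{n,k}: k.-tuples over 'I_n (= Z_n as a set); position j : 'I_k
   is coordinate x_{j+1} of the paper. *)
Definition vtx (n k : nat) := (k.-tuple 'I_n).

Definition isz n (a : 'I_n) : bool := nat_of_ord a == 0.

Definition R1 n k (u v : vtx n k) : bool :=
  [forall j : 'I_k, (j.+1 < k) ==> (tnth u j == tnth v j)].

(* (R2) with paper index i (0 <= i <= k-2): common prefix of length i,
   u is zero on positions >= i, v is nonzero on positions >= i. *)
Definition R2 n k (u v : vtx n k) : bool :=
  [exists i : 'I_k, (i.+1 < k) &&
     [forall j : 'I_k, if j < i then tnth u j == tnth v j
                       else isz (tnth u j) && ~~ isz (tnth v j)]].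

(* (R3) with paper index i+1 (1 <= i+1 <= k-1): common prefix of length i,
   distinct nonzero entries at position i, zeros afterwards. *)
Definition R3 n k (u v : vtx n k) : bool :=
  [exists i : 'I_k, (i.+1 < k) &&
     [forall j : 'I_k, if j < i then tnth u j == tnth v j
                       else if j == i then
                         [&& ~~ isz (tnth u j), ~~ isz (tnth v j) & tnth u j != tnth v j]
                       else isz (tnth u j) && isz (tnth v j)]].

Definition Hadj n k : rel (vtx n k) := fun u v =>
  (u != v) && [|| R1 u v, R2 u v, R2 v u | R3 u v].

(* graph distance in a finite graph: least m such that there is a walk of
   length m from x to y (walks of length m are m.-tuples of successive
   vertices); #|T| if y is unreachable (does not occur for connected graphs). *)
Definition walkb (T : finType) (e : rel T) (x y : T) (m : nat) : bool :=
  [exists t : m.-tuple T, path e x t && (last x t == y)].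

Definition gdist (T : finType) (e : rel T) (x y : T) : nat :=
  find (walkb e x y) (iota 0 #|T|).

Definition gdist_set (T : finType) (e : rel T) (x : T) (U : {set T}) : nat :=
  \big[minn/#|T|]_(u in U) gdist e x u.

Definition distH {n k} := @gdist (vtx n k) (@Hadj n k).
Definition distHset {n k} := @gdist_set (vtx n k) (@Hadj n k).

Definition hroot n k (hn : 0 < n) : vtx n k := [tuple (Ordinal hn) | _ < k].

Definition periph n k : {set vtx n k} :=
  [set x : vtx n k | [forall j : 'I_k, ~~ isz (tnth x j)]].

Definition prep n k (a : 'I_n) (x : vtx n k) : vtx n k.+1 := [tuple of a :: x].

(* Main.v *)
Require Import Defs.
From mathcomp Require Import all_boot zify.
Set Implicit Arguments. Unset Strict Implicit. Unset Printing Implicit Defensive.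

Section Gen.
Variables (T : finType) (e : rel T).

Lemma walkbP x y m : reflect (exists p : seq T, [/\ size p = m, path e x p & last x p = y]) (walkb e x y m).
Proof.
apply: (iffP existsP) => [[t /andP[h /eqP l]] | [p [s h l]]].
  by exists (val t); rewrite size_tuple.
have sp : size p == m by rewrite s.
by exists (Tuple sp); rewrite /= h l eqxx.
Qed.

Lemma gdist_le x y m : walkb e x y m -> gdist e x y <= m.
Proof.
move=> w; rewrite /gdist; case: (ltnP m #|T|) => hm.
  rewrite leqNgt; apply/negP => /(before_find 0).
  by rewrite nth_iota // add0n w.
by apply: leq_trans (find_size _ _) _; rewrite size_iota.
Qed.

Lemma walk_short x y m : walkb e x y m -> exists2 m', m' < #|T| & walkb e x y m'.
Proof.
case/walkbP => p [_ hp hl]; rewrite -hl; case: (shortenP hp) => p' hp' hu _.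
exists (size p'); last by apply/walkbP; exists p'.
have /card_uniqP hs := hu; have := max_card (mem (x :: p')).
by rewrite hs.
Qed.

Lemma gdist_walk x y m : walkb e x y m -> walkb e x y (gdist e x y).
Proof.
move/walk_short=> [m' hm w].
have hh : has (walkb e x y) (iota 0 #|T|) by apply/hasP; exists m' => //; rewrite mem_iota.
have hf := hh; rewrite has_find size_iota in hf.
by move: (nth_find 0 hh); rewrite nth_iota // add0n.
Qed.

Lemma walk_bound (f : T -> nat) : (forall a b, e a b -> f b <= (f a).+1) ->
  forall p x, path e x p -> f (last x p) <= f x + size p.
Proof.
move=> hf; elim=> [|z p IH] x /=; first by rewrite addn0.
case/andP=> exz /IH h; apply: leq_trans h _; have := hf _ _ exz; lia.
Qed.

Lemma gdist_char (f : T -> nat) x y : f x = 0 -> (forall a b, e a b -> f b <= (f a).+1) ->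
  walkb e x y (f y) -> gdist e x y = f y.
Proof.
move=> f0 hf w; apply/eqP; rewrite eqn_leq gdist_le //=.
have/walkbP [p [hs hp hl]] := gdist_walk w.
by rewrite -hs -hl; have := walk_bound hf hp; rewrite f0.
Qed.

Lemma walk0 x : walkb e x x 0.
Proof. by apply/walkbP; exists [::]. Qed.

Lemma walk1 x y : e x y -> walkb e x y 1.
Proof. by move=> h; apply/walkbP; exists [:: y]; rewrite /= h. Qed.

Lemma walk_cat x y z m1 m2 : walkb e x y m1 -> walkb e y z m2 -> walkb e x z (m1 + m2).
Proof.
case/walkbP=> p1 [s1 h1 l1] /walkbP [p2 [s2 h2 l2]]; apply/walkbP; exists (p1 ++ p2).
by rewrite size_cat cat_path last_cat l1 h1 h2 s1 s2.
Qed.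

Hypothesis esym : symmetric e.

Lemma walk_rev x y m : walkb e x y m -> walkb e y x m.
Proof.
case/walkbP=> p [s h l]; apply/walkbP; exists (rev (belast x p)).
rewrite size_rev size_belast s -l rev_path; split=> //.
  by rewrite (@eq_path _ _ e) // => a b; rewrite esym.
case: p {s h l} => //= z p; rewrite rev_cons last_rcons //.
Qed.

Hypothesis conn : forall x y, exists m, walkb e x y m.

Lemma gdistW x y : walkb e x y (gdist e x y).
Proof. by have [m w] := conn x y; exact: gdist_walk w. Qed.

Lemma gdist_tri x y z : gdist e x z <= gdist e x y + gdist e y z.
Proof. exact/gdist_le/walk_cat/gdistW/gdistW. Qed.

Lemma gdist_sym x y : gdist e x y = gdist e y x.
Proof.
by apply/eqP; rewrite eqn_leq !gdist_le // walk_rev // gdistW.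
Qed.

Lemma gdist0 x : gdist e x x = 0.
Proof. by apply/eqP; rewrite -leqn0 gdist_le // walk0. Qed.

Lemma gdist1 x y : e x y -> gdist e x y <= 1.
Proof. by move/walk1/gdist_le. Qed.

End Gen.

Lemma gdist_lt (T : finType) (e : rel T) x y m : walkb e x y m -> gdist e x y < #|T|.
Proof.
move/walk_short=> [m' hm w].
have hh : has (walkb e x y) (iota 0 #|T|) by apply/hasP; exists m' => //; rewrite mem_iota.
by rewrite has_find size_iota in hh.
Qed.

Lemma bigmin_le (I : eqType) (r : seq I) (P : pred I) (F : I -> nat) idx p :
  p \in r -> P p -> \big[minn/idx]_(i <- r | P i) F i <= F p.
Proof.
elim: r => //= a r IH; rewrite inE big_cons; case/orP => [/eqP<-|hp] hP.
  by rewrite hP geq_minl.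
case: (P a); last exact: IH.
exact: leq_trans (geq_minr _ _) (IH hp hP).
Qed.

Lemma bigmin_set_le (T : finType) (U : {set T}) (F : T -> nat) idx p :
  p \in U -> \big[minn/idx]_(u in U) F u <= F p.
Proof. by move=> hp; apply: bigmin_le => //; rewrite mem_index_enum. Qed.

Lemma bigmin_set_eq (T : finType) (U : {set T}) (F : T -> nat) idx p0 :
  p0 \in U -> F p0 < idx -> exists2 p, p \in U & \big[minn/idx]_(u in U) F u = F p.
Proof.
move=> hp0 hlt.
have : idx <= \big[minn/idx]_(u in U) F u \/ exists2 p, p \in U & \big[minn/idx]_(u in U) F u = F p.
  apply: (big_ind (fun x => idx <= x \/ exists2 p, p \in U & x = F p)).
  - by left.
  - move=> x y hx hy; case: (leqP x y) => h.
      by [].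
    by [].
  - by move=> i hi; right; exists i.
case=> // h; have := bigmin_set_le F idx hp0; lia.
Qed.

Section H.
Variable n : nat.

Lemma tnth_prep0 k a (x : vtx n k) : tnth (prep a x) ord0 = a.
Proof. by rewrite (tnth_nth a). Qed.

Lemma tnth_prepS k a (x : vtx n k) (j : 'I_k) : tnth (prep a x) (lift ord0 j) = tnth x j.
Proof. by rewrite (tnth_nth a) lift0 /= (tnth_nth a). Qed.

Lemma prep_inj k a b (x y : vtx n k) : prep a x = prep b y -> a = b /\ x = y.
Proof.
move=> h; have := congr1 val h => /= [[-> hxy]]; split=> //; exact: val_inj.
Qed.

Lemma prep_surj k (v : vtx n k.+1) : exists a x, v = prep a x.
Proof. exists (thead v), (behead_tuple v); exact: tuple_eta. Qed.

Definition allz k (x : vtx n k) := [forall j, isz (tnth x j)].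

Lemma allz_root k (hn : 0 < n) (x : vtx n k) : allz x = (x == hroot k hn).
Proof.
apply/forallP/eqP => [h | ->].
  apply: eq_from_tnth => j; apply: val_inj; rewrite tnth_mktuple /=; exact/eqP/h.
by move=> j; rewrite tnth_mktuple.
Qed.

Lemma in_periph k (x : vtx n k) : (x \in periph n k) = [forall j, ~~ isz (tnth x j)].
Proof. by rewrite in_set. Qed.

Lemma R1_prep k (hk : 0 < k) a b (x y : vtx n k) :
  R1 (prep a x) (prep b y) = (a == b) && R1 x y.
Proof.
rewrite /R1; apply/idP/idP.
  move/forallP=> H; have := H ord0; rewrite !tnth_prep0 /= ltnS hk /= => ->.
  apply/forallP => j; have := H (lift ord0 j); by rewrite !tnth_prepS lift0 ltnS.
case/andP=> /eqP <- /forallP H; apply/forallP => j.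
case: (unliftP ord0 j) => [j'|] ->; first by rewrite !tnth_prepS lift0 ltnS; exact: H.
by rewrite !tnth_prep0 eqxx implybT.
Qed.

Lemma R2_prep k (hk : 0 < k) a b (x y : vtx n k) :
  R2 (prep a x) (prep b y) = [&& isz a, ~~ isz b, allz x & y \in periph n k] || (a == b) && R2 x y.
Proof.
rewrite /R2; apply/idP/idP.
  case/existsP => i /andP[hi /forallP H]; case: (unliftP ord0 i) hi H => [i'|] -> hi H.
    apply/orP; right; have := H ord0; rewrite !tnth_prep0 lift0 /= => ->.
    apply/existsP; exists i'; rewrite lift0 ltnS in hi; rewrite hi /=.
    by apply/forallP => j; have := H (lift ord0 j); rewrite !tnth_prepS !lift0 ltnS.
  have := H ord0; rewrite !tnth_prep0 /= => /andP[-> ->]; apply/orP; left.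
  rewrite /= /allz in_periph; apply/andP; split; apply/forallP => j;
    by have := H (lift ord0 j); rewrite !tnth_prepS lift0 /= => /andP[].
case/orP => [/and4P[za nzb /forallP zx py] | /andP[/eqP <- /existsP[i /andP[hi /forallP H]]]];
  apply/existsP.
  exists ord0; rewrite /= ltnS hk /=; move: py; rewrite in_periph => /forallP py.
  apply/forallP => j; case: (unliftP ord0 j) => [j'|] -> /=.
    by rewrite !tnth_prepS zx py.
  by rewrite !tnth_prep0 za nzb.
exists (lift ord0 i); rewrite lift0 ltnS hi /=; apply/forallP => j.
case: (unliftP ord0 j) => [j'|] ->; first by rewrite !tnth_prepS !lift0 ltnS; exact: H.
by rewrite !tnth_prep0 /= eqxx.
Qed.

Lemma R3_prep k (hk : 0 < k) a b (x y : vtx n k) :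
  R3 (prep a x) (prep b y) = [&& ~~ isz a, ~~ isz b, a != b, allz x & allz y] || (a == b) && R3 x y.
Proof.
rewrite /R3; apply/idP/idP.
  case/existsP => i /andP[hi /forallP H]; case: (unliftP ord0 i) hi H => [i'|] -> hi H.
    apply/orP; right; have := H ord0; rewrite !tnth_prep0 lift0 /= => ->.
    apply/existsP; exists i'; rewrite lift0 ltnS in hi; rewrite hi /=.
    apply/forallP => j; have := H (lift ord0 j); rewrite !tnth_prepS !lift0 ltnS.
    by rewrite (inj_eq (@lift_inj _ ord0)).
  have := H ord0; rewrite !tnth_prep0 /= => /and3P[-> -> ->]; apply/orP; left.
  rewrite /allz /=; apply/andP; split; apply/forallP => j;
    by have := H (lift ord0 j); rewrite !tnth_prepS lift0 /= => /andP[].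
case/orP => [/and5P[za nzb nab /forallP zx /forallP zy] | /andP[/eqP <- /existsP[i /andP[hi /forallP H]]]];
  apply/existsP.
  exists ord0; rewrite /= ltnS hk /=.
  apply/forallP => j; case: (unliftP ord0 j) => [j'|] -> /=.
    by rewrite !tnth_prepS zx zy.
  by rewrite !tnth_prep0 za nzb nab.
exists (lift ord0 i); rewrite lift0 ltnS hi /=; apply/forallP => j.
case: (unliftP ord0 j) => [j'|] ->.
  by rewrite !tnth_prepS !lift0 ltnS (inj_eq (@lift_inj _ ord0)); exact: H.
by rewrite !tnth_prep0 /=.
Qed.


Lemma prep_neq k a b (x y : vtx n k) : (prep a x != prep b y) = (a != b) || (x != y).
Proof.
apply/idP/idP.
  by apply: contraNT; rewrite negb_or !negbK => /andP[/eqP -> /eqP ->].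
by apply: contraTT; rewrite negbK negb_or => /eqP /prep_inj [-> ->]; rewrite !eqxx.
Qed.

Lemma Hadj_prep k (hk : 0 < k) a b (x y : vtx n k) :
  Hadj (prep a x) (prep b y) =
  [|| (a == b) && Hadj x y, [&& isz a, ~~ isz b, allz x & y \in periph n k],
      [&& isz b, ~~ isz a, allz y & x \in periph n k]
    | [&& ~~ isz a, ~~ isz b, a != b, allz x & allz y]].
Proof.
rewrite /Hadj R1_prep // !R2_prep // R3_prep // prep_neq.
case: (eqVneq a b) => [<-|nab] /=.
  by case: (isz a); rewrite /= ?orbF.
by rewrite !orbF.
Qed.

Lemma R1_sym k (u v : vtx n k) : R1 u v = R1 v u.
Proof. by apply: eq_forallb => j; rewrite eq_sym. Qed.

Lemma R3_sym k (u v : vtx n k) : R3 u v = R3 v u.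
Proof.
apply: eq_existsb => i; congr (_ && _); apply: eq_forallb => j.
rewrite eq_sym; case: ifP => // _; case: ifP => _; last by rewrite andbC.
by rewrite eq_sym; case: (isz _); case: (isz _).
Qed.

Lemma Hadj_sym k : symmetric (@Hadj n k).
Proof.
move=> u v; rewrite /Hadj eq_sym R1_sym R3_sym; congr (_ && _).
by case: (R2 u v); case: (R2 v u); rewrite /= ?orbT.
Qed.

End H.

Section H2.
Variable n : nat.

Lemma Hadj_lift k a (x y : vtx n k) : Hadj x y -> Hadj (prep a x) (prep a y).
Proof.
case: k x y => [|k] x y.
  by rewrite (tuple0 x) (tuple0 y) /Hadj eqxx.
by move=> h; rewrite Hadj_prep // eqxx h.
Qed.

Lemma Hadj_len1 a b (x y : vtx n 0) : a != b -> Hadj (prep a x) (prep b y).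
Proof.
move=> nab; rewrite /Hadj prep_neq nab /=; apply/orP; left.
by apply/forallP => -[[|j] hj].
Qed.

Lemma hroot_prep k (h0 : 0 < n) : hroot k.+1 h0 = prep (Ordinal h0) (hroot k h0).
Proof.
apply: eq_from_tnth => j; case: (unliftP ord0 j) => [j'|] ->;
  by rewrite ?tnth_prep0 ?tnth_prepS !tnth_mktuple.
Qed.

Lemma allz_hroot k (h0 : 0 < n) : allz (hroot k h0).
Proof. by rewrite (allz_root h0) eqxx. Qed.

Lemma periph_prep k a (x : vtx n k) :
  (prep a x \in periph n k.+1) = ~~ isz a && (x \in periph n k).
Proof.
rewrite !in_periph; apply/forallP/andP => [H|[ha /forallP H] j].
  split; first by have := H ord0; rewrite tnth_prep0.
  by apply/forallP => j; have := H (lift ord0 j); rewrite tnth_prepS.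
by case: (unliftP ord0 j) => [j'|] ->; rewrite ?tnth_prep0 ?tnth_prepS.
Qed.

Lemma const_periph k a : ~~ isz a -> [tuple a | _ < k] \in periph n k.
Proof. by move=> za; rewrite in_periph; apply/forallP => j; rewrite tnth_mktuple. Qed.

Lemma isz0 (h0 : 0 < n) : isz (Ordinal h0).
Proof. by []. Qed.

Lemma zero_uniq (a b : 'I_n) : isz a -> isz b -> a = b.
Proof. by move=> /eqP ha /eqP hb; apply: val_inj; rewrite /= ha hb. Qed.

Lemma root_periph k (hk : 0 < k) (h0 : 0 < n) (p : vtx n k) : p \in periph n k -> Hadj (hroot k h0) p.
Proof.
move: p; case: k hk => // k _ p; have [b [p' ->]] := prep_surj p.
rewrite periph_prep hroot_prep => /andP[nb pp].
clear p; case: k p' pp => [|k] p' pp.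
  by apply: Hadj_len1; apply/eqP => eb; move: nb; rewrite -eb.
by rewrite Hadj_prep //; apply/orP; right; apply/orP; left; rewrite isz0 nb allz_hroot pp.
Qed.

Lemma walk_lift k a (x y : vtx n k) m :
  walkb (@Hadj n _) x y m -> walkb (@Hadj n _) (prep a x) (prep a y) m.
Proof.
case/walkbP => p [s hp hl]; apply/walkbP; exists (map (prep a) p).
rewrite size_map last_map hl; split=> //.
elim: p x hp {s hl} => //= z p IH x /andP[h1 h2]; rewrite Hadj_lift //=; exact: IH.
Qed.

Lemma conn_root k (h0 : 0 < n) (x : vtx n k) : exists m, walkb (@Hadj n _) x (hroot k h0) m.
Proof.
elim: k x => [|k IH] x.
  by exists 0; rewrite (tuple0 x) (tuple0 (hroot 0 h0)); exact: walk0.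
have [a [x' ->]] := prep_surj x; have [m w] := IH x'; rewrite hroot_prep.
have w1 := walk_lift a w.
case: (boolP (isz a)) => za.
  move: w1; rewrite (zero_uniq za (isz0 h0)) => w1; by exists m.
suff [m2 w2] : exists m2, walkb (@Hadj n _) (prep a (hroot k h0)) (prep (Ordinal h0) (hroot k h0)) m2.
  by exists (m + m2); exact: walk_cat w1 w2.
clear IH x w w1; case: k x' => [|k].
  by exists 1; apply/walk1/Hadj_len1; apply/eqP => ea; move: za; rewrite ea.
have pp := const_periph k.+1 za.
exists (1 + 1); apply: walk_cat (walk1 (Hadj_lift a (root_periph (ltn0Sn k) h0 pp))) (walk1 _).
by rewrite Hadj_prep //; apply/orP; right; apply/orP; right; apply/orP; left; rewrite isz0 za allz_hroot pp.
Qed.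

Lemma Hconn k (h0 : 0 < n) (x y : vtx n k) : exists m, walkb (@Hadj n _) x y m.
Proof.
have [m1 w1] := conn_root h0 x; have [m2 w2] := conn_root h0 y.
exists (m1 + m2); apply: walk_cat w1 (walk_rev (@Hadj_sym n k) w2).
Qed.

End H2.

Section Main.
Variables (n k : nat) (hn : 1 < n) (hk : 1 <= k).

Local Notation h0 := (ltnW hn).
Local Notation r := (hroot k (ltnW hn)).
Local Notation d := (@distH n k).
Local Notation dP z := (@distHset n k z (periph n k)).
Local Notation P := (periph n k).

Lemma dsym x y : d x y = d y x.
Proof. exact: (gdist_sym (@Hadj_sym n k) (@Hconn n k h0)). Qed.

Lemma dtri x y z : d x z <= d x y + d y z.
Proof. exact: (gdist_tri (@Hconn n k h0)). Qed.

Lemma d0 x : d x x = 0.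
Proof. exact: gdist0. Qed.

Lemma dadj x y : Hadj x y -> d x y <= 1.
Proof. exact: gdist1. Qed.

Lemma dW x y : walkb (@Hadj n k) x y (d x y).
Proof. exact: (gdistW (@Hconn n k h0)). Qed.

Lemma dP_le z p : p \in P -> dP z <= d z p.
Proof. exact: bigmin_set_le. Qed.

Lemma dP_ex z : exists2 p, p \in P & dP z = d z p.
Proof.
have pp : [tuple (Ordinal hn) | _ < k] \in P by apply: const_periph.
rewrite /distHset /gdist_set; apply: (bigmin_set_eq pp).
by have [m w] := Hconn h0 z [tuple (Ordinal hn) | _ < k]; exact: gdist_lt w.
Qed.

Lemma drp p : p \in P -> d r p <= 1.
Proof. by move=> pp; apply: dadj; apply: root_periph. Qed.

Lemma dP_lip z z' : Hadj z z' -> dP z' <= dP z + 1.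
Proof.
move=> h; have [p pp ->] := dP_ex z.
have := dP_le z' pp; have := dtri z' z p; have := dadj h; rewrite dsym; lia.
Qed.

Lemma dP_root z : dP z <= d z r + 1.
Proof.
have [p pp _] := dP_ex z; have := dP_le z pp; have := dtri z r p; have := drp pp; lia.
Qed.

Lemma d_root_dP z : d z r <= dP z + 1.
Proof.
have [p pp ->] := dP_ex z; have := dtri z p r; have := drp pp; rewrite (dsym r); lia.
Qed.

Lemma d_p_dP z p : p \in P -> d z p <= dP z + 2.
Proof.
move=> pp; have [q qp ->] := dP_ex z; have := dtri z q p; have := dtri q r p.
have := drp pp; have := drp qp; rewrite (dsym r q); lia.
Qed.

Definition Dd (a : 'I_n) (x : vtx n k) (c : 'I_n) (z : vtx n k) : nat :=
  if c == a then d x z else if isz a then d x r + 1 + dP z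
  else if isz c then dP x + 1 + d r z else minn (dP x + 2 + dP z) (d x r + 1 + d r z).

Definition fD a x (v : vtx n k.+1) := Dd a x (thead v) (behead_tuple v).

Lemma fD_prep a x c z : fD a x (prep c z) = Dd a x c z.
Proof. by rewrite /fD; congr Dd; apply: val_inj. Qed.

Lemma neq_z (a c : 'I_n) : isz c -> ~~ isz a -> (c == a) = false.
Proof. by move=> zc za; apply/eqP => e; move: za; rewrite -e zc. Qed.

Lemma neq_z' (a c : 'I_n) : isz a -> ~~ isz c -> (c == a) = false.
Proof. by move=> za zc; apply/eqP => e; move: zc; rewrite e za. Qed.

Lemma fD_lip a x v w : Hadj v w -> fD a x w <= (fD a x v).+1.
Proof.
have [c [z ->]] := prep_surj v; have [c' [z' ->]] := prep_surj w.
rewrite !fD_prep Hadj_prep // /Dd.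
have hxr := d_root_dP x; have hrx := dP_root x.
case/or4P.
- case/andP => /eqP <- hzz'.
  have e1 := dadj hzz'; have e2 : d z' z <= 1 by rewrite dsym.
  have t1 := dtri x z z'; have t2 := dtri r z z'; have := dP_lip hzz'.
  by case: ifP => _; [lia|]; case: ifP => _; [lia|]; case: ifP => _; lia.
- case/and4P => zc nzc' zz pz'; rewrite (allz_root h0) in zz; move/eqP: zz => ->.
  have := dP_le z' pz'; rewrite d0 => dPz'.
  case: (boolP (isz a)) => za.
    rewrite (zero_uniq zc za) eqxx.
    have -> : (c' == a) = false by apply/eqP => e; move: nzc'; rewrite e za.
    lia.
  rewrite (neq_z zc za) zc d0; have := d_p_dP x pz'.
  by case: ifP => _; rewrite ?(negbTE nzc'); lia.
- case/and4P => zc' nzc zz' pz; rewrite (allz_root h0) in zz'; move/eqP: zz' => ->.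
  case: (boolP (isz a)) => za.
    by rewrite (zero_uniq zc' za) eqxx (neq_z' za nzc); lia.
  rewrite (neq_z zc' za) zc' d0 (negbTE nzc).
  have := dP_le x pz; have := dtri x r z.
  by case: ifP => _; lia.
- case/and5P => nzc nzc' ncc' zz zz'; rewrite (allz_root h0) in zz; rewrite (allz_root h0) in zz'.
  move/eqP: zz => ->; move/eqP: zz' => ->.
  rewrite (negbTE nzc) (negbTE nzc') d0.
  case: (boolP (isz a)) => za.
    rewrite (neq_z' za nzc) (neq_z' za nzc'); lia.
  by case: ifP => _; case: ifP => _; lia.
Qed.

Lemma distH_fD a x v : walkb (@Hadj n k.+1) (prep a x) v (fD a x v) ->
  distH (prep a x) v = fD a x v.
Proof.
apply: gdist_char; first by rewrite fD_prep /Dd eqxx d0.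
exact: fD_lip.
Qed.

Lemma walk_eq (T : finType) (e : rel T) x y m1 m2 : m1 = m2 -> walkb e x y m1 -> walkb e x y m2.
Proof. by move->. Qed.

Lemma part_a a x y : distH (prep a x) (prep a y) = d x y.
Proof.
have -> : d x y = fD a x (prep a y) by rewrite fD_prep /Dd eqxx.
apply: distH_fD; rewrite fD_prep /Dd eqxx; exact: walk_lift (dW x y).
Qed.

Lemma part_b a x y : ~~ isz a ->
  distH (prep (Ordinal h0) x) (prep a y) = d x r + 1 + dP y.
Proof.
move=> za.
have E : fD (Ordinal h0) x (prep a y) = d x r + 1 + dP y.
  by rewrite fD_prep /Dd (neq_z' (isz0 h0) za) isz0.
rewrite -E; apply: distH_fD; rewrite E.
have [p pp hp] := dP_ex y.
have w1 := walk_lift (Ordinal h0) (dW x r).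
have e1 : Hadj (prep (Ordinal h0) r) (prep a p).
  by rewrite Hadj_prep //; apply/orP; right; apply/orP; left; rewrite isz0 za allz_hroot pp.
have w2 := walk_lift a (dW p y).
apply: walk_eq (walk_cat (walk_cat w1 (walk1 e1)) w2).
by rewrite hp (dsym p).
Qed.

Lemma part_c a b x y : ~~ isz a -> ~~ isz b -> a != b ->
  distH (prep a x) (prep b y) = minn (dP x + 2 + dP y) (d x r + 1 + d r y).
Proof.
move=> za zb nab.
have E : fD a x (prep b y) = minn (dP x + 2 + dP y) (d x r + 1 + d r y).
  rewrite fD_prep /Dd eq_sym (negbTE nab) (negbTE za) (negbTE zb); done.
rewrite -E; apply: distH_fD; rewrite E.
case: (leqP (dP x + 2 + dP y) (d x r + 1 + d r y)) => hle.
  have [px ppx hpx] := dP_ex x; have [py ppy hpy] := dP_ex y.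
  have w1 := walk_lift a (dW x px).
  have e1 : Hadj (prep a px) (prep (Ordinal h0) r).
    by rewrite Hadj_prep //; apply/orP; right; apply/orP; right; apply/orP; left;
       rewrite isz0 za allz_hroot ppx.
  have e2 : Hadj (prep (Ordinal h0) r) (prep b py).
    by rewrite Hadj_prep //; apply/orP; right; apply/orP; left; rewrite isz0 zb allz_hroot ppy.
  have w2 := walk_lift b (dW py y).
  apply: walk_eq (walk_cat (walk_cat (walk_cat w1 (walk1 e1)) (walk1 e2)) w2).
  by rewrite hpx hpy (dsym py); lia.
have w1 := walk_lift a (dW x r).
have e1 : Hadj (prep a r) (prep b r).
  by rewrite Hadj_prep //; apply/orP; right; apply/orP; right; apply/orP; right;
     rewrite za zb nab !allz_hroot.
have w2 := walk_lift b (dW r y).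
apply: walk_eq (walk_cat (walk_cat w1 (walk1 e1)) w2); lia.
Qed.

End Main.

Theorem mainTheorem5 (n k' : nat) (hn : 1 < n) (hk : 1 <= k') :
  (forall (a : 'I_n) (x y : vtx n k'),
      distH (prep a x) (prep a y) = distH x y) /\
  (forall (a : 'I_n) (x y : vtx n k'), ~~ isz a ->
      distH (prep (Ordinal (ltnW hn)) x) (prep a y)
      = distH x (hroot k' (ltnW hn)) + 1 + distHset y (periph n k')) /\
  (forall (a b : 'I_n) (x y : vtx n k'), ~~ isz a -> ~~ isz b -> a != b ->
      distH (prep a x) (prep b y)
      = minn (distHset x (periph n k') + 2 + distHset y (periph n k'))
             (distH x (hroot k' (ltnW hn)) + 1 + distH (hroot k' (ltnW hn)) y)).
Proof.
split; first by move=> a x y; exact: (part_a hn hk).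
split; first by move=> a x y za; exact: (part_b hn hk).
by move=> a b x y za zb nab; exact: (part_c hn hk).
Qed.
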